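(* Every strongly sofic monoid is surjunctive.
   Context: A monoid $M$ is strongly sofic if for every finite subset $K \subset M$ there exists an integer $\Delta_K \geq 1$ such that for every $\varepsilon > 0$ there exist a non-empty finite set $D$ and a map $\sigma \colon M \to \operatorname{Map}(D)$ (where $\operatorname{Map}(D)$ is the set of all maps $D \to D$ with composition) satisfying: (1) $\sigma(1_M) = \mathrm{Id}_D$; (2) $d_D^{\mathrm{Ham}}(\sigma(k_1k_2),\sigma(k_1)\sigma(k_2)) \leq \varepsilon$ for all $k_1,k_2 \in K$; (3) $d_D^{\mathrm{Ham}}(\sigma(k_1),\sigma(k_2)) \geq 1-\varepsilon$ for all distinct $k_1,k_2 \in K$; (4) $|\sigma(k)^{-1}(v)| \leq \Delta_K$ for all $k \in K$ and $v \in D$. Here $d_D^{\mathrm{Ham}}(f,g) = \frac{1}{|D|}|\{v \in D : f(v) \neq g(v)\}|$ is the Hamming metric. For a monoid $M$ and a finite set $A$, $A^M$ is the set of all maps $M \to A$ with the prodiscrete (product of discrete) topology and the shift action of $M$ given by $(mx)(m') = x(m'm)$ for $m,m' \in M$, $x \in A^M$. A cellular automaton is a continuous $M$-equivariant map $\tau \colon A^M \to A^M$. A monoid $M$ is surjunctive if for every finite set $A$, every injective cellular automaton $\tau \colon A^M \to A^M$ is surjective. *)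

(* Defs.v *)
From mathcomp Require Import all_boot.
From Stdlib Require Import Reals.
Set Implicit Arguments.
Unset Strict Implicit.
Unset Printing Implicit Defensive.

Record monoid := Monoid {
  mcar :> Type;
  mmul : mcar -> mcar -> mcar;
  mone : mcar;
  mmulA : forall a b c, mmul a (mmul b c) = mmul (mmul a b) c;
  mmul1m : forall a, mmul mone a = a;
  mmulm1 : forall a, mmul a mone = a
}.

Definition ham_dist (D : finType) (f g : D -> D) : R :=
  (INR #|[set v : D | f v != g v]| / INR #|D|)%R.

(* Strong soficity; finite subsets K of M are represented by lists. *)
Definition strongly_sofic (M : monoid) : Prop :=
  forall K : list M, exists Delta : nat, (1 <= Delta)%N /\
    forall eps : R, (0 < eps)%R ->
      exists (D : finType) (sigma : M -> D -> D),
        (0 < #|D|)%N /\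
        sigma (mone M) = (fun v : D => v) /\
        (forall k1 k2, List.In k1 K -> List.In k2 K ->
           (ham_dist (sigma (mmul k1 k2)) (sigma k1 \o sigma k2) <= eps)%R) /\
        (forall k1 k2, List.In k1 K -> List.In k2 K -> k1 <> k2 ->
           (1 - eps <= ham_dist (sigma k1) (sigma k2))%R) /\
        (forall k v, List.In k K -> (#|[set u : D | sigma k u == v]| <= Delta)%N).

Definition shift (M : monoid) (A : Type) (m : M) (x : M -> A) : M -> A :=
  fun m' => x (mmul m' m).

(* Continuity for the prodiscrete topology on A^M (A finite, discrete):
   each coordinate of the image depends only on finitely many coordinates
   of the input near every point (basic open sets are cylinders). *)
Definition prodiscrete_continuous (M : monoid) (A : Type)
    (tau : (M -> A) -> (M -> A)) : Prop :=
  forall (x : M -> A) (m : M), exists F : list M,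
    forall y : M -> A, (forall f, List.In f F -> y f = x f) -> tau y m = tau x m.

Definition cellular_automaton (M : monoid) (A : finType)
    (tau : (M -> A) -> (M -> A)) : Prop :=
  prodiscrete_continuous tau /\
  (forall (m : M) (x : M -> A), tau (shift m x) = shift m (tau x)).

Definition surjunctive (M : monoid) : Prop :=
  forall (A : finType) (tau : (M -> A) -> (M -> A)),
    cellular_automaton tau -> injective tau -> forall y, exists x, tau x = y.

(* Main.v *)
Require Import Defs.
From mathcomp Require Import all_boot.
From Stdlib Require Import Reals.
From Stdlib Require Import Classical ClassicalEpsilon Lra FunctionalExtensionality.
From mathcomp Require Import zify.
From mathcomp Require classical_sets.
Local Notation "m ^ n" := (expn m n) : nat_scope.
Set Implicit Arguments.
Unset Strict Implicit.
Unset Printing Implicit Defensive.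

Section Compact.
Variables (M : Type) (B : finType) (C : list M -> (M -> B) -> Prop).
Hypothesis Cne : forall F, exists x, C F x.
Hypothesis Cmono : forall F F' x, List.incl F F' -> C F' x -> C F x.
Hypothesis Ccl : forall F x,
  (forall L, exists z, C F z /\ forall m, List.In m L -> z m = x m) -> C F x.

Let T := (M * B)%type.
Let functional (G : T -> Prop) := forall m b b', G (m,b) -> G (m,b') -> b = b'.
Let consistent (G : T -> Prop) := forall F L, (forall m, List.In m L -> exists b, G (m,b)) ->
   exists z, C F z /\ forall m, List.In m L -> G (m, z m).
Let P (G : T -> Prop) := functional G /\ consistent G.

Lemma compactness : exists x, forall F, C F x.
Proof.
have [A [[Afun Acons] Amax]] : exists A, P A /\ forall B, classical_sets.proper A B -> ~ P B.
  apply: classical_sets.Zorn_bigcup => Fam FP Ftot; split.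
  - move=> m b b' [X1 F1 X1b] [X2 F2 X2b].
    case: (Ftot _ _ F1 F2) => sub.
    + exact: (proj1 (FP _ F2) m b b' (sub _ X1b) X2b).
    + exact: (proj1 (FP _ F1) m b b' X1b (sub _ X2b)).
  - move=> F L HL.
    have : L = nil \/ exists X, Fam X /\ forall m, List.In m L -> exists b, X (m,b).
      elim: L HL => [|m L IH] HL; first by left.
      right; have [b [X0 FX0 X0b]] := HL m (or_introl erefl).
      case: (IH (fun m' h => HL m' (or_intror h))) => [->|[X1 [FX1 HX1]]].
        by exists X0; split=> // m' [<-|[]]; exists b.
      case: (Ftot _ _ FX0 FX1) => sub.
      + exists X1; split=> // m' [<-|h]; last exact: HX1.
        by exists b; apply: sub.
      + exists X0; split=> // m' [<-|h]; first by exists b.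
        by have [b' hb'] := HX1 m' h; exists b'; apply: sub.
    case=> [->|[X [FX HX]]].
      by have [z Cz] := Cne F; exists z; split.
    have [z [Cz Hz]] := proj2 (FP _ FX) F L HX.
    by exists z; split=> // m h; exists X => //; apply: Hz.
have tot : forall m0, exists b, A (m0, b).
  move=> m0; apply: NNPP => H.
  pose Ab b := fun p : T => A p \/ p = (m0, b).
  have notP b : ~ P (Ab b).
    apply: Amax; split; first by move=> p h; left.
    move=> sub; apply: H; exists b; exact: (sub (m0,b) (or_intror erefl)).
  have funAb b : functional (Ab b).
    move=> m c c' [h1|[e1 e1']] [h2|[e2 e2']].
    - exact: Afun h1 h2.
    - by case: H; exists c; rewrite -e2.
    - by case: H; exists c'; rewrite -e1.
    - by rewrite e1' e2'.
  pose Bad b F L := (forall m, List.In m L -> exists b', Ab b (m,b')) /\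
     ~ exists z, C F z /\ forall m, List.In m L -> Ab b (m, z m).
  have badb b : exists F L, Bad b F L.
    apply: NNPP => nb; apply: (notP b); split; first exact: funAb.
    move=> F L HL; apply: NNPP => nz; apply: nb; exists F, L; split=> //.
  have comb : forall s : list B, exists Fs Ls,
      (forall m, List.In m Ls -> m = m0 \/ exists b', A (m,b')) /\
      forall b, b \in s -> exists Fb Lb, Bad b Fb Lb /\ List.incl Fb Fs /\ List.incl Lb Ls.
    elim=> [|b s [Fs [Ls [HLs Hs]]]]; first by exists nil, nil; split.
    have [Fb [Lb [HLb nz]]] := badb b.
    exists (Fb ++ Fs), (Lb ++ Ls); split.
      move=> m h0; case: (List.in_app_or _ _ _ h0) => h; last exact: HLs.
      have [b' [h'|[-> _]]] := HLb m h; [right; exists b' | left] => //.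
    move=> c; rewrite inE => /orP [/eqP ->|cs].
      exists Fb, Lb; split; first by split.
      by split; apply: List.incl_appl; apply: List.incl_refl.
    have [Fc [Lc [bad [i1 i2]]]] := Hs c cs.
    by exists Fc, Lc; split=> //; split; apply: List.incl_appr.
  have [Fs [Ls [HLs Hs]]] := comb (enum B).
  pose Ls' := List.filter (fun m => if excluded_middle_informative (m = m0) then false else true) Ls.
  have inLs' m : List.In m Ls -> m <> m0 -> List.In m Ls'.
    move=> h1 h2; apply/List.filter_In; split=> //.
    by case: excluded_middle_informative.
  have [z [Cz Hz]] : exists z, C Fs z /\ forall m, List.In m Ls' -> A (m, z m).
    apply: Acons => m /List.filter_In [h1 h2].
    case: (HLs m h1) => // e; move: h2; case: excluded_middle_informative => //.
  have [Fb [Lb [[_ nz] [i1 i2]]]] := Hs (z m0) (mem_enum _ _).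
  apply: nz; exists z; split; first exact: Cmono i1 Cz.
  move=> m h; case: (classic (m = m0)) => [->|ne]; first by right.
  by left; apply: Hz; apply: inLs' => //; apply: i2.
pose x := fun m => proj1_sig (constructive_indefinite_description _ (tot m)).
have Ax m : A (m, x m) by rewrite /x; case: constructive_indefinite_description.
exists x => F; apply: Ccl => L.
have [z [Cz Hz]] := Acons F L (fun m _ => tot m).
by exists z; split=> // m h; apply: (Afun m); [apply: Hz | apply: Ax].
Qed.

End Compact.

Section Key.
Variables (D A : finType) (r : nat) (psi : 'I_r -> D) (g : 'I_r -> A).
Variable X : {set {ffun D -> A}}.
Hypothesis psi_inj : injective psi.
Hypothesis Xinv : forall w w' : {ffun D -> A},
  (forall u, (forall i, psi i != u) -> w u = w' u) -> (w \in X) = (w' \in X).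

Let pat (w : {ffun D -> A}) : {ffun 'I_r -> A} := [ffun i => w (psi i)].
Let Xh h := [set w in X | pat w == h].
Let patch (h : {ffun 'I_r -> A}) (w : {ffun D -> A}) : {ffun D -> A} :=
  [ffun u => if [pick i | psi i == u] is Some i then h i else w u].

Let patch_psi h w i : patch h w (psi i) = h i.
Proof.
rewrite /patch ffunE; case: pickP => [j /eqP /psi_inj -> //|].
by move=> /(_ i); rewrite eqxx.
Qed.

Let patch_out h w u : (forall i, psi i != u) -> patch h w u = w u.
Proof.
move=> H; rewrite /patch ffunE; case: pickP => // j /eqP e.
by have := H j; rewrite e eqxx.
Qed.

Let le_Xh h h' : #|Xh h| <= #|Xh h'|.
Proof.
have inj : {in Xh h &, injective (patch h')}.
  move=> w1 w2; rewrite !inE => /andP [_ /eqP p1] /andP [_ /eqP p2] e.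
  apply/ffunP => u; case: (pickP (fun i => psi i == u)) => [i /eqP <-|np].
    by move/ffunP: p1 => /(_ i); move/ffunP: p2 => /(_ i); rewrite !ffunE => -> ->.
  have H : forall i, psi i != u by move=> i; have := np i => ->.
  by rewrite -(patch_out h' w1 H) -(patch_out h' w2 H) e.
rewrite -(card_in_imset inj); apply: subset_leq_card.
apply/subsetP => _ /imsetP [w wX ->]; move: wX; rewrite !inE => /andP [wX _].
apply/andP; split.
  rewrite (Xinv (w' := w)) // => u H; exact: patch_out.
by apply/eqP/ffunP => i; rewrite ffunE patch_psi.
Qed.

Lemma key_count :
  #|[set w in X | [exists i, w (psi i) != g i]]| * #|A| ^ r = #|X| * (#|A| ^ r - 1).
Proof.
pose g0 : {ffun 'I_r -> A} := [ffun i => g i].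
have sumX : #|X| = #|A| ^ r * #|Xh g0|.
  rewrite -sum1_card (partition_big pat xpredT) //=.
  transitivity (\sum_(h : {ffun 'I_r -> A}) #|Xh g0|).
    apply: eq_bigr => h _.
    have -> : \sum_(i in X | pat i == h) 1 = #|Xh h|.
      by rewrite -sum1_card; apply: eq_bigl => w; rewrite !inE.
    by apply/eqP; rewrite eqn_leq !le_Xh.
  by rewrite sum_nat_const card_ffun card_ord.
have -> : [set w in X | [exists i, w (psi i) != g i]] = X :\: Xh g0.
  apply/setP => w; rewrite !inE; case: (w \in X); rewrite ?andbF // andbT.
  apply/existsP/idP => [[i ni]|ne].
    by apply: contra ni => /eqP /ffunP /(_ i); rewrite !ffunE => ->.
  case: (boolP [exists i, w (psi i) != g i]) => [/existsP //|].
  rewrite negb_exists => /forallP H; case/negP: ne.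
  by apply/eqP/ffunP => i; rewrite !ffunE; have := H i; rewrite negbK => /eqP.
rewrite cardsD.
have -> : X :&: Xh g0 = Xh g0.
  by apply/setIidPr/subsetP => w; rewrite inE => /andP [].
rewrite sumX mulnBr muln1 mulnBl; congr (_ - _); by rewrite mulnC.
Qed.

End Key.

Section Avoid.
Variables (D A : finType) (r : nat) (phi : D -> 'I_r -> D) (g : 'I_r -> A).
Definition Sav (s : seq D) :=
  [set w : {ffun D -> A} | all (fun v => [exists i, w (phi v i) != g i]) s].

Lemma avoid_count s : uniq s -> {in s, forall v, injective (phi v)} ->
  {in s &, forall v v', v != v' -> forall i j, phi v i != phi v' j} ->
  #|Sav s| * (#|A| ^ r) ^ (size s) = #|A| ^ #|D| * (#|A| ^ r - 1) ^ (size s).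
Proof.
elim: s => [|v s IH] /=.
  move=> _ _ _; rewrite !expn0 !muln1.
  have -> : Sav [::] = setT by apply/setP => w; rewrite !inE.
  by rewrite cardsT card_ffun.
move=> /andP [vs us] inj disj.
have sub : {subset s <= v :: s} by move=> u h; rewrite inE h orbT.
have IH' := IH us (fun v' h => inj v' (sub _ h))
   (fun v1 v2 h1 h2 => disj v1 v2 (sub _ h1) (sub _ h2)).
have -> : Sav (v :: s) = [set w in Sav s | [exists i, w (phi v i) != g i]].
  by apply/setP => w; rewrite !inE andbC.
rewrite !expnS mulnA.
rewrite (@key_count D A r (phi v) g (Sav s)); last first.
- move=> w w' H; rewrite !inE; apply: eq_in_all => v' v's.
  have nv : v != v' by apply: contraNneq vs => ->.
  apply: eq_existsb => i; congr (~~ (_ == _)); apply: H => j.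
  by apply: disj; rewrite ?inE ?eqxx ?v's ?orbT.
- by apply: inj; rewrite inE eqxx.
by rewrite mulnAC IH' -mulnA (mulnC (_ ^ size s)).
Qed.
End Avoid.

Lemma bern x T : x ^ T * (x + T) <= (x + 1) ^ T * x.
Proof.
elim: T => [|T IH]; first by rewrite !expn0 !mul1n addn0.
rewrite !expnS.
apply: (@leq_trans ((x + 1) * (x ^ T * (x + T)))); last first.
  by rewrite -[X in _ <= X]mulnA leq_mul2l IH orbT.
set y := x ^ T; nia.
Qed.

Lemma leq_expl m n e : m <= n -> m ^ e <= n ^ e.
Proof. by move=> h; elim: e => // e IH; rewrite !expnS leq_mul. Qed.

Lemma final_arith a x beta n : 1 <= a -> 1 <= x -> (a - 1) * x * beta < n ->
  a ^ beta * x ^ n < (x + 1) ^ n.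
Proof.
move=> a1 x1 hn; set T := (a - 1) * x.
have h1 : a * x ^ T <= (x + 1) ^ T.
  have := bern x T; rewrite /T.
  have -> : x + (a - 1) * x = a * x by rewrite -{1}(mul1n x) -mulnDl subnKC.
  by rewrite mulnA (mulnC _ a) leq_pmul2r.
have h2 : a ^ beta * x ^ (T * beta) <= (x + 1) ^ (T * beta).
  by rewrite (expnM x T beta) (expnM (x+1) T beta) -expnMn; apply: leq_expl.
have [k ->] : exists k, n = T * beta + k.+1 by exists (n - T * beta).-1; lia.
rewrite !expnD mulnA.
apply: (@leq_trans (a ^ beta * x ^ (T * beta) * (x + 1) ^ k.+1)).
  rewrite ltn_pmul2l ?ltn_exp2r ?addn1 //.
  by rewrite muln_gt0 !expn_gt0 a1 x1.
by rewrite leq_mul2r h2 orbT.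
Qed.

Definition decb (P : Prop) : bool :=
  if excluded_middle_informative P then true else false.
Lemma decbP (P : Prop) : reflect P (decb P).
Proof. by rewrite /decb; case: excluded_middle_informative => h; [left|right]. Qed.

Lemma card_factor (T U V : finType) (f : T -> U) (g : T -> V) :
  (forall x y, f x = f y -> g x = g y) -> #|g @: setT| <= #|f @: setT|.
Proof.
move=> H; case: (pickP (fun _ : T => true)) => [x0 _|T0].
  pose h u := g (odflt x0 [pick x | f x == u]).
  apply: (@leq_trans #|h @: (f @: setT)|); last exact: leq_imset_card.
  apply: subset_leq_card; apply/subsetP => _ /imsetP [x _ ->].
  apply/imsetP; exists (f x); first by apply/imsetP; exists x.
  rewrite /h; case: pickP => [x' /eqP e|/(_ x)]; last by rewrite eqxx.
  by apply: H; rewrite e.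
have -> : g @: setT = set0.
  by apply/setP => v; rewrite inE; apply/imsetP => [[x _ _]]; have := T0 x.
by rewrite cards0.
Qed.

Lemma card_bigcup_le (I T : finType) (P : pred I) (B : I -> {set T}) :
  #|\bigcup_(i | P i) B i| <= \sum_(i | P i) #|B i|.
Proof.
elim/big_rec2: _ => [|i n S _ IH]; first by rewrite cards0.
by apply: leq_trans (leq_card_setU _ _).1 _; rewrite leq_add2l.
Qed.

Lemma card_foldU (T : finType) (ls : list {set T}) (c : R) :
  (forall X, List.In X ls -> (INR #|X| <= c)%R) ->
  (INR #|foldr (@setU T) set0 ls| <= INR (length ls) * c)%R.
Proof.
elim: ls => [|X ls IH] H; first by rewrite /= cards0 /=; lra.
have h1 := H X (or_introl erefl).
have h2 := IH (fun Y h => H Y (or_intror h)).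
have h3 : (INR #|X :|: foldr (@setU T) set0 ls| <= INR #|X| + INR #|foldr (@setU T) set0 ls|)%R.
  by rewrite -plus_INR; apply: le_INR; apply/leP; exact: (leq_card_setU _ _).1.
have -> : length (X :: ls) = S (length ls) by [].
rewrite S_INR /=; lra.
Qed.

Lemma length_flat_map (X Y : Type) (f : X -> list Y) c l :
  (forall a, length (f a) = c) -> length (List.flat_map f l) = (c * length l)%nat.
Proof.
move=> H; elim: l => [|a l IH] /=; first by rewrite muln0.
by rewrite List.length_app H IH mulnS.
Qed.

Lemma in_foldU (T : finType) (ls : list {set T}) X v :
  List.In X ls -> v \in X -> v \in foldr (@setU T) set0 ls.
Proof.
elim: ls => [|Y ls IH] //= [->|h] hv; rewrite inE; first by rewrite hv.
by rewrite IH ?orbT.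
Qed.

Lemma real_aux (bt d q : R) : (0 < q)%R -> (bt <= d / (2 * q))%R -> (INR 2 * q * bt <= d)%R.
Proof.
move=> qp h; have -> : INR 2 = 2%R by simpl; lra.
have e : (d = 2 * q * (d / (2 * q)))%R by field; lra.
rewrite [X in (_ <= X)%R]e; apply: Rmult_le_compat_l => //; lra.
Qed.

Theorem theorem1p1 (M : monoid) : strongly_sofic M -> surjunctive M.
Proof.
move=> sofic A tau [cont equiv] inj y.
apply: NNPP => noy.
have a0 : A := y (mone M).
have [A1|A2] := leqP #|A| 1.
  apply: noy; exists (fun _ => a0); apply: functional_extensionality => m.
  by move/card_le1_eqP: A1 => H; apply: H.
have [F0 HF0] : exists F : list M, forall X, ~ (forall f, List.In f F -> tau X f = y f).
  apply: NNPP => H.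
  have ne : forall F : list M, exists X, forall f, List.In f F -> tau X f = y f.
    move=> F; apply: NNPP => nx; apply: H; exists F => X hX; apply: nx; exists X; exact hX.
  have cl : forall F X, (forall L, exists z, (forall f, List.In f F -> tau z f = y f) /\
      forall m, List.In m L -> z m = X m) -> forall f, List.In f F -> tau X f = y f.
    move=> F X H' f hf; have [L HL] := cont X f; have [z [Cz Az]] := H' L.
    by rewrite -(HL z Az); apply: Cz.
  have [X HX] := @compactness M A (fun F X => forall f, List.In f F -> tau X f = y f) ne
    (fun F F' X hi h f hf => h f (hi f hf)) cl.
  apply: noy; exists X; apply: functional_extensionality => m.
  exact: (HX [:: m] m (or_introl erefl)).
have [S memS] : exists S : list M, forall X X', (forall s, List.In s S -> X s = X' s) ->
    tau X (mone M) = tau X' (mone M).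
  pose C := fun (S : list M) (p : M -> A * A) =>
    (forall s, List.In s S -> (p s).1 = (p s).2) /\
    tau (fun m => (p m).1) (mone M) <> tau (fun m => (p m).2) (mone M).
  suff [S HS] : exists S, forall p, ~ C S p.
    exists S => X X' h; apply: NNPP => ne; apply: (HS (fun m => (X m, X' m))).
    by split.
  apply: NNPP => H.
  have ne : forall S, exists p, C S p.
    move=> F; apply: NNPP => nx; apply: H; exists F => p hp; apply: nx; exists p; exact hp.
  have mono : forall F F' p, List.incl F F' -> C F' p -> C F p.
    by move=> F F' p hi [h1 h2]; split=> // s hs; apply: h1; apply: hi.
  have cl : forall F p, (forall L, exists z, C F z /\ forall m, List.In m L -> z m = p m) -> C F p.
    move=> F p H'; split.
      move=> s hs; have [z [[Cz _] Az]] := H' [:: s].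
      by rewrite -(Az s (or_introl erefl)); apply: Cz.
    have [L1 HL1] := cont (fun m => (p m).1) (mone M).
    have [L2 HL2] := cont (fun m => (p m).2) (mone M).
    have [z [[_ Cz] Az]] := H' (L1 ++ L2).
    have e1 : tau (fun m => (z m).1) (mone M) = tau (fun m => (p m).1) (mone M).
      by apply: HL1 => m hm /=; rewrite Az //; apply: List.in_or_app; left.
    have e2 : tau (fun m => (z m).2) (mone M) = tau (fun m => (p m).2) (mone M).
      by apply: HL2 => m hm /=; rewrite Az //; apply: List.in_or_app; right.
    by rewrite -e1 -e2.
  have [p Hp] := compactness ne mono cl.
  have [_ nq] := Hp nil; apply: nq; congr (tau _ _); apply: functional_extensionality => m.
  by have [h _] := Hp [:: m]; apply: h; left.
have [N memN] : exists N : list M, forall X X', (forall n, List.In n N -> tau X n = tau X' n) ->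
    X (mone M) = X' (mone M).
  pose C := fun (N : list M) (p : M -> A * A) =>
    (forall n, List.In n N -> tau (fun m => (p m).1) n = tau (fun m => (p m).2) n) /\
    (p (mone M)).1 <> (p (mone M)).2.
  suff [N HN] : exists N, forall p, ~ C N p.
    exists N => X X' h; apply: NNPP => ne; apply: (HN (fun m => (X m, X' m))).
    by split.
  apply: NNPP => H.
  have ne : forall S, exists p, C S p.
    move=> F; apply: NNPP => nx; apply: H; exists F => p hp; apply: nx; exists p; exact hp.
  have mono : forall F F' p, List.incl F F' -> C F' p -> C F p.
    by move=> F F' p hi [h1 h2]; split=> // s hs; apply: h1; apply: hi.
  have cl : forall F p, (forall L, exists z, C F z /\ forall m, List.In m L -> z m = p m) -> C F p.
    move=> F p H'; split; last first.
      have [z [[_ Cz] Az]] := H' [:: mone M].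
      by rewrite -(Az _ (or_introl erefl)).
    move=> n hn.
    have [L1 HL1] := cont (fun m => (p m).1) n.
    have [L2 HL2] := cont (fun m => (p m).2) n.
    have [z [[Cz _] Az]] := H' (L1 ++ L2).
    have e1 : tau (fun m => (z m).1) n = tau (fun m => (p m).1) n.
      by apply: HL1 => m hm /=; rewrite Az //; apply: List.in_or_app; left.
    have e2 : tau (fun m => (z m).2) n = tau (fun m => (p m).2) n.
      by apply: HL2 => m hm /=; rewrite Az //; apply: List.in_or_app; right.
    by rewrite -e1 -e2; apply: Cz.
  have [p Hp] := compactness ne mono cl.
  have [_ nq] := Hp nil; apply: nq.
  have e : (fun m => (p m).1) = (fun m => (p m).2).
    apply: inj; apply: functional_extensionality => m.
    by have [h _] := Hp [:: m]; apply: h; left.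
  exact: (congr1 (fun f => f (mone M)) e).

pose decM := fun a b : M => excluded_middle_informative (a = b).
pose F := List.nodup decM F0.
have HF : forall X, ~ (forall f, List.In f F -> tau X f = y f).
  move=> X h; apply: (HF0 X) => f hf; apply: h; apply/List.nodup_In; exact hf.
have ndF : List.NoDup F := List.NoDup_nodup decM F0.
pose r := length F.
have r0 : (0 < r)%N.
  rewrite /r; case E: F => [|f F'] //=.
  by case: (HF (fun _ => a0)); rewrite E.
pose K := S ++ N ++ F.
have inS s : List.In s S -> List.In s K by move=> h; apply: List.in_or_app; left.
have inN n : List.In n N -> List.In n K.
  by move=> h; apply: List.in_or_app; right; apply: List.in_or_app; left.
have inF f : List.In f F -> List.In f K.
  by move=> h; apply: List.in_or_app; right; apply: List.in_or_app; right.
have [Delta [Delta1 HD]] := sofic K.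
pose a := #|A|. pose b := a ^ r. pose x := b - 1. pose T := (a - 1) * x.
pose P := r * r * Delta. pose Q := P * T + 1.
pose Lk := 2 * (length K * length K).
have Kpos : (0 < length K)%N by rewrite /K !List.length_app; rewrite -/r; lia.
have Lkpos : (0 < Lk)%N by rewrite /Lk muln_gt0 /= muln_gt0 Kpos.
have LQpos : (0 < 2 * Lk * Q)%N by rewrite muln_gt0 (muln_gt0 2 Lk) Lkpos /Q addn1.
have Qdef : Q = (P * T + 1)%N by [].
have Lkdef : Lk = (2 * (length K * length K))%N by [].
clearbody Lk Q.
pose eps := (/ INR (2 * Lk * Q))%R.
have epspos : (0 < eps)%R by apply: Rinv_0_lt_compat; apply: lt_0_INR; apply/ltP.
have epsdef : eps = (/ INR (2 * Lk * Q))%R by [].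
clearbody eps.
have [D [sigma [Dpos [sig1 [Hcomp [Hdist Hfib]]]]]] := HD eps epspos.

pose good v := forall k1 k2, List.In k1 K -> List.In k2 K ->
   sigma (mmul k1 k2) v = sigma k1 (sigma k2 v) /\ (k1 <> k2 -> sigma k1 v <> sigma k2 v).
pose W := [set v : D | decb (good v)].
have Wgood v : v \in W -> good v by rewrite inE => /decbP.
pose B1 k1 k2 := [set v : D | sigma (mmul k1 k2) v != (sigma k1 \o sigma k2) v].
pose B2 k1 k2 := if excluded_middle_informative (k1 = k2) then set0
   else [set v : D | sigma k1 v == sigma k2 v].
pose sets := List.flat_map (fun k1 => List.flat_map (fun k2 => [:: B1 k1 k2; B2 k1 k2]) K) K.
have lsets : length sets = Lk.
  rewrite /sets (@length_flat_map _ _ _ (2 * length K)); first by rewrite Lkdef mulnA.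
  by move=> k1; rewrite (@length_flat_map _ _ _ 2).
have dpos : (0 < INR #|D|)%R by apply: lt_0_INR; apply/ltP.
have setsb : forall X, List.In X sets -> (INR #|X| <= eps * INR #|D|)%R.
  move=> X /List.in_flat_map [k1 [hk1 /List.in_flat_map [k2 [hk2 hX]]]].
  case: hX => [<-|[<-|[]]].
    have := Hcomp k1 k2 hk1 hk2; rewrite /ham_dist => h.
    apply: (Rmult_le_reg_r (/ INR #|D|)); first by apply: Rinv_0_lt_compat.
    rewrite Rmult_assoc Rinv_r ?Rmult_1_r; [exact h | lra].
  rewrite /B2; destruct (excluded_middle_informative (k1 = k2)) as [e0|ne].
    rewrite cards0 /=; apply: Rmult_le_pos; [exact: Rlt_le epspos | exact: Rlt_le dpos].
  have := Hdist k1 k2 hk1 hk2 ne; rewrite /ham_dist => h.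
  set c := #|[set v | sigma k1 v == sigma k2 v]|.
  have e : #|[set v | sigma k1 v != sigma k2 v]| = (#|D| - c)%N.
    rewrite -(cardsC [set v | sigma k1 v == sigma k2 v]) addKn.
    by apply: eq_card => v; rewrite !inE.
  have cle : (c <= #|D|)%N by rewrite /c -(cardsC [set v | sigma k1 v == sigma k2 v]) leq_addr.
  rewrite e minus_INR in h; last by apply/leP.
  have h' : (INR c * / INR #|D| <= eps)%R.
    have ee : ((INR #|D| - INR c) / INR #|D| = 1 - INR c * / INR #|D|)%R by field; lra.
    rewrite ee in h; lra.
  apply: (Rmult_le_reg_r (/ INR #|D|)); first by apply: Rinv_0_lt_compat.
  rewrite Rmult_assoc Rinv_r ?Rmult_1_r; [exact h' | lra].
have Wc : ~: W \subset foldr (@setU D) set0 sets.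
  apply/subsetP => v; rewrite in_setC /W inE => nd.
  have nv : ~ good v by move=> gv; move/negP: nd; apply; apply/decbP.
  apply: NNPP => nin; apply: nv => k1 k2 h1 h2; split.
    apply: NNPP => ne; apply: nin; apply: (@in_foldU D sets (B1 k1 k2)).
      apply/List.in_flat_map; exists k1; split=> //; apply/List.in_flat_map.
      by exists k2; split=> //; left.
    by rewrite inE; apply/eqP.
  move=> ne12 eq; apply: nin; apply: (@in_foldU D sets (B2 k1 k2)).
    apply/List.in_flat_map; exists k1; split=> //; apply/List.in_flat_map.
    by exists k2; split=> //; right; left.
  rewrite /B2; destruct (excluded_middle_informative (k1 = k2)) as [e0|ne0]; first by [].
  by rewrite inE eq eqxx.
pose beta := #|~: W|.
have hbeta : (2 * Q * beta <= #|D|)%N.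
  have h1 := card_foldU setsb.
  have h2 : (INR beta <= INR #|foldr (@setU D) set0 sets|)%R.
    by apply: le_INR; apply/leP; apply: subset_leq_card.
  rewrite lsets in h1.
  have qpos : (0 < INR Q)%R by apply: lt_0_INR; apply/ltP; rewrite Qdef addn1.
  have lpos : (0 < INR Lk)%R by apply: lt_0_INR; apply/ltP.
  have key : (INR Lk * (eps * INR #|D|) = INR #|D| / (2 * INR Q))%R.
    rewrite epsdef !mult_INR /=; field; lra.
  apply/leP; apply: INR_le; rewrite !mult_INR; apply: real_aux => //; lra.

pose Phi (z : {ffun D -> A}) : {ffun D -> A} :=
  [ffun v => tau (fun m => z (sigma m v)) (mone M)].
have loc : forall (z : {ffun D -> A}) v k, good v -> List.In k K ->
    tau (fun m => z (sigma m v)) k = Phi z (sigma k v).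
  move=> z v k gv hk.
  have -> : tau (fun m => z (sigma m v)) k =
      shift k (tau (fun m => z (sigma m v))) (mone M) by rewrite /shift mmul1m.
  rewrite -equiv ffunE; apply: memS => s hs; rewrite /shift.
  by have [-> _] := gv s k (inS s hs) hk.
have lowinj : forall z z' : {ffun D -> A}, Phi z = Phi z' -> forall v, v \in W -> z v = z' v.
  move=> z z' e v /Wgood gv.
  have h := memN (fun m => z (sigma m v)) (fun m => z' (sigma m v)).
  rewrite sig1 in h; apply: h => n hn.
  by rewrite !loc ?e //; apply: inN.
pose Rz (z : {ffun D -> A}) : {ffun D -> A} := [ffun v => if v \in W then z v else a0].
have low : (a ^ #|W| <= #|Phi @: setT|)%N.
  apply: leq_trans (card_factor (f := Phi) (g := Rz) _); last first.
    move=> z z' e; apply/ffunP => v; rewrite !ffunE; case: ifP => // vW.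
    exact: lowinj.
  rewrite /a -cardsT -(card_pffun_on a0 W [set: A]).
  apply: subset_leq_card; apply/subsetP => f /pffun_onP [sup _].
  apply/imsetP; exists f; first by rewrite inE.
  apply/ffunP => v; rewrite ffunE.
  case: ifP => // vW; apply/eqP; apply: contraFT vW => nf.
  exact: (subsetP sup).

pose phi (v : D) (i : 'I_r) := sigma (List.nth i F (mone M)) v.
pose g (i : 'I_r) := y (List.nth i F (mone M)).
have nthF (i : 'I_r) : List.In (List.nth i F (mone M)) F.
  by apply: List.nth_In; apply/ltP.
have phi_inj : forall v, v \in W -> injective (phi v).
  move=> v /Wgood gv i j e; apply: val_inj; apply: NNPP => nij.
  have [_ h] := gv _ _ (inF _ (nthF i)) (inF _ (nthF j)).
  apply: h e => en; apply: nij.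
  by apply: ((List.NoDup_nth F (mone M)).1 ndF i j) => //; apply/ltP.
pose ov v v' := [exists i, exists j, phi v i == phi v' j].
have ovC u v : ov u v = ov v u.
  by apply/existsP/existsP => [[i /existsP [j /eqP e]]|[i /existsP [j /eqP e]]];
    exists j; apply/existsP; exists i; rewrite e.
have ovself u : ov u u.
  by apply/existsP; exists (Ordinal r0); apply/existsP; exists (Ordinal r0).
pose PV (V : {set D}) := (V \subset W) &&
  [forall v in V, forall v' in V, (v != v') ==> ~~ ov v v'].
have PV0 : PV set0 by rewrite /PV sub0set; apply/forallP => v; rewrite inE.
have [V PVV Vmax] := @arg_maxnP _ set0 PV (fun V => #|V|) PV0.
move/andP: PVV => [VW Vdisj].
have Vd : forall v v', v \in V -> v' \in V -> v != v' -> ~~ ov v v'.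
  move=> v v' vV v'V ne.
  by move/forallP/(_ v)/implyP/(_ vV)/forallP/(_ v')/implyP/(_ v'V)/implyP/(_ ne): Vdisj.
have cover : forall w, w \in W -> exists2 v, v \in V & ov w v.
  move=> w wW; apply: NNPP => nc.
  have nov : forall v, v \in V -> ~~ ov w v.
    by move=> v vV; apply/negP => h; apply: nc; exists v.
  have wV : w \notin V by apply/negP => h; have := nov w h; rewrite ovself.
  have PV1 : PV (w |: V).
    rewrite /PV subUset sub1set wW VW /=.
    apply/forallP => u; apply/implyP; rewrite in_setU1 => hu.
    apply/forallP => u'; apply/implyP; rewrite in_setU1 => hu'; apply/implyP => ne.
    case/orP: hu => [/eqP eu|uV]; case/orP: hu' => [/eqP eu'|u'V].
    - by rewrite eu eu' eqxx in ne.
    - by rewrite eu; apply: nov.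
    - by rewrite eu' ovC; apply: nov.
    - exact: Vd.
  have := Vmax (w |: V) PV1; rewrite cardsU1 wV /=.
  by rewrite add1n ltnn.
have WV : (#|W| <= #|V| * P)%N.
  pose U := \bigcup_(v in V) \bigcup_(p : 'I_r * 'I_r)
     [set w | sigma (List.nth p.1 F (mone M)) w == phi v p.2].
  have WU : W \subset U.
    apply/subsetP => w wW; have [v vV /existsP [i /existsP [j /eqP e]]] := cover w wW.
    apply/bigcupP; exists v => //; apply/bigcupP; exists (i, j) => //.
    by rewrite inE; apply/eqP.
  apply: leq_trans (subset_leq_card WU) _.
  apply: leq_trans (card_bigcup_le _ _) _.
  apply: (@leq_trans (\sum_(v in V) P)); last by rewrite sum_nat_const.
  apply: leq_sum => v _.
  apply: leq_trans (card_bigcup_le _ _) _.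
  apply: (@leq_trans (\sum_(p : 'I_r * 'I_r) Delta)).
    by apply: leq_sum => p _; apply: Hfib; apply: inF.
  by rewrite sum_nat_const card_prod card_ord.

have Im_sub : Phi @: setT \subset Sav phi g (enum V).
  apply/subsetP => _ /imsetP [z _ ->]; rewrite inE; apply/allP => v.
  rewrite mem_enum => vV.
  have gv := Wgood v (subsetP VW v vV).
  have [f [hf nf]] : exists f, List.In f F /\ tau (fun m => z (sigma m v)) f <> y f.
    apply: NNPP => H; apply: (HF (fun m => z (sigma m v))) => f hf.
    by apply: NNPP => ne; apply: H; exists f.
  have [i [hi ei]] := List.In_nth F f (mone M) hf.
  apply/existsP; exists (Ordinal (introT ltP hi)); rewrite /phi /g /= ei; apply/eqP.
  by rewrite -(loc z v f gv (inF f hf)).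
have injV : {in enum V, forall v, injective (phi v)}.
  by move=> v; rewrite mem_enum => vV; apply: phi_inj; apply: (subsetP VW).
have disjV : {in enum V &, forall v v', v != v' -> forall i j, phi v i != phi v' j}.
  move=> v v'; rewrite !mem_enum => vV v'V ne i j.
  apply: contra (Vd v v' vV v'V ne) => e.
  by apply/existsP; exists i; apply/existsP; exists j.
have cnt := @avoid_count D A r phi g (enum V) (enum_uniq _) injV disjV.
rewrite -cardE in cnt.
have c1 : (a ^ #|W| * b ^ #|V| <= a ^ #|D| * x ^ #|V|)%N.
  rewrite /b /x /a -cnt.
  exact: leq_mul (leq_trans low (subset_leq_card Im_sub)) (leqnn _).

have DW : #|D| = (#|W| + beta)%N by rewrite /beta cardsC.
have apos : (0 < a)%N by apply: ltnW.
have c2 : (b ^ #|V| <= a ^ beta * x ^ #|V|)%N.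
  move: c1; rewrite DW expnD -mulnA leq_pmul2l //.
  by rewrite expn_gt0 apos.
have bx : (a <= b)%N by rewrite /b -{1}(expn1 a); apply: leq_pexp2l.
have x1 : (0 < x)%N by rewrite /x subn_gt0; exact: leq_trans A2 bx.
have xb : (x + 1 = b)%N by rewrite /x addn1 -subSn ?subn1 //; exact: leq_trans apos bx.
have hlt : ((a - 1) * x * beta < #|V|)%N.
  rewrite ltnNge; apply/negP => hle.
  have h1 : (#|V| * P <= (a - 1) * x * beta * P)%N := leq_mul hle (leqnn P).
  move: hbeta h1 WV Dpos; rewrite Qdef DW /T.
  generalize ((a - 1) * x) => t; generalize P => p; generalize #|V| => n; generalize #|W| => w.
  move=> *; nia.
have := final_arith apos x1 hlt; rewrite xb => h.
by move: c2; rewrite leqNgt h.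
Qed.
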